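(* Let $n\geq 2$ and let $G\in\mathcal{G}_{2n}$. Let $M$ be a perfect matching of $G$. Then $f(G,M)=n-1$ if and only if for any two distinct edges $e_i,e_j\in M$, the induced subgraph $G[V(\{e_i,e_j\})]$ contains an $M$-alternating cycle. Consequently, $G$ has a perfect matching $M$ with $f(G,M)=n-1$ if and only if $G$ has a perfect matching $M$ with this property. Moreover, $G$ is minimal if and only if $G$ has a perfect matching $M$ such that for any two distinct edges $e_i,e_j\in M$, $G[V(\{e_i,e_j\})]$ is exactly an $M$-alternating $4$-cycle (i.e. the induced subgraph on these four vertices is a $4$-cycle alternating between $M$ and non-$M$ edges, with no further edges).
   Context: All graphs are finite and simple. $\mathcal{G}_{2n}$ denotes the set of all graphs with $2n$ vertices that have a perfect matching. For an edge set $S$, $V(S)$ is the set of end vertices of edges of $S$; $G[T]$ is the subgraph induced by a vertex set $T$. For a perfect matching $M$ of $G$, a cycle is $M$-alternating if its edges alternate between $M$ and $E(G)\setminus M$. A forcing set of $M$ is a subset $S\subseteq M$ contained in no other perfect matching of $G$; the forcing number $f(G,M)$ is the minimum size of a forcing set of $M$. The maximum forcing number $F(G)$ is the maximum of $f(G,M)$ over all perfect matchings $M$ of $G$ (so $F(G)\le n-1$ for $G\in\mathcal{G}_{2n}$). A graph $G\in\mathcal{G}_{2n}$ with $F(G)=n-1$ is called minimal if for every edge $e$ of $G$, either $G-e$ has no perfect matching or $F(G-e)\leq n-2$ (in fact the paper shows $G-e$ always has a perfect matching, so the condition is $F(G-e)\le n-2$). *)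

(* Defs.v *)
(* A simple graph on a finite vertex type T is given by its
   edge set E : {set {set T}}, every edge being a 2-element subset of T. *)
From mathcomp Require Import all_boot.
Set Implicit Arguments. Unset Strict Implicit. Unset Printing Implicit Defensive.

Section Graphs.
Variable T : finType.
Implicit Types (E M S : {set {set T}}) (V : {set T}).

Definition simple_graph E : bool := [forall a in E, #|a| == 2].

Definition perfect_matching E M : bool :=
  (M \subset E) && [forall x : T, #|[set a in M | x \in a]| == 1].

Definition has_perfect_matching E : bool := [exists M, perfect_matching E M].

Definition forcing_set E M S : bool :=
  (S \subset M) &&
  [forall M' : {set {set T}}, (perfect_matching E M' && (S \subset M')) ==> (M' == M)].

(* forcing number f(G,M): minimum size of a forcing set of M
   (M itself is a forcing set when M is a perfect matching, so the initial
   value #|M| of the minimum is harmless) *)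
Definition forcing_number E M : nat :=
  \big[minn/#|M|]_(S in powerset M | forcing_set E M S) #|S|.

Definition max_forcing_number E : nat :=
  \max_(M | perfect_matching E M) forcing_number E M.

Definition minimal_graph (n : nat) E : Prop :=
  has_perfect_matching E /\ max_forcing_number E = n.-1 /\
  forall a, a \in E ->
    ~~ has_perfect_matching (E :\ a) \/ max_forcing_number (E :\ a) <= n.-2.

Definition cyc_edge (x0 : T) (s : seq T) (i : nat) : {set T} :=
  [set nth x0 s i; nth x0 s (i.+1 %% size s)].

(* s = [v_0; ...; v_{k-1}] is an M-alternating cycle of the graph E:
   distinct vertices, k >= 4 even, consecutive vertices (cyclically) adjacent,
   and the edge v_i v_{i+1} is in M exactly when i is even *)
Definition alt_cycle E M (s : seq T) : Prop :=
  match s with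
  | [::] => False
  | x0 :: _ =>
      uniq s /\ 4 <= size s /\ ~~ odd (size s) /\
      forall i, i < size s ->
        cyc_edge x0 s i \in E /\ ((cyc_edge x0 s i \in M) = ~~ odd i)
  end.

Definition induced_edges E V : {set {set T}} := [set a in E | a \subset V].

Definition has_alt_cycle_in E M V : Prop :=
  exists s, alt_cycle (induced_edges E V) M s.

Definition is_alt_4cycle E M V : Prop :=
  exists a b c d : T,
    alt_cycle (induced_edges E V) M [:: a; b; c; d] /\
    induced_edges E V =
      [set a; b] |: ([set b; c] |: ([set c; d] |: [set ([set d; a] : {set T})])).

End Graphs.

(* Main.v *)
Require Import Defs.
From mathcomp Require Import all_boot zify.
From Stdlib Require Import Classical.
Set Implicit Arguments. Unset Strict Implicit. Unset Printing Implicit Defensive.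

Section G.
Variable T : finType.
Implicit Types (F M : {set {set T}}).

Lemma pmP F M : reflect [/\ M \subset F, forall x, exists2 e, e \in M & x \in e &
   forall x e1 e2, e1 \in M -> e2 \in M -> x \in e1 -> x \in e2 -> e1 = e2]
   (perfect_matching F M).
Proof.
apply: (iffP idP).
  move=> /andP[sub /forallP H]; split=> //.
    move=> x; move/cards1P: (H x) => [e He].
    have: e \in [set a in M | x \in a] by rewrite He set11.
    by rewrite inE => /andP[? ?]; exists e.
  move=> x e1 e2 M1 M2 x1 x2; move/cards1P: (H x) => [e He].
  have: e1 \in [set a in M | x \in a] by rewrite inE M1 x1.
  have: e2 \in [set a in M | x \in a] by rewrite inE M2 x2.
  by rewrite He !in_set1 => /eqP -> /eqP ->.
case=> sub cov uq; apply/andP; split=> //; apply/forallP=> x.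
have [e eM xe] := cov x; apply/cards1P; exists e.
apply/setP=> h; rewrite !inE; apply/andP/eqP.
  by case=> hM xh; apply: uq xh xe.
by move->.
Qed.

Lemma edgeP F e : simple_graph F -> e \in F -> exists u v, u != v /\ e = [set u; v].
Proof. by move=> /forallP /(_ e) /implyP H /H /cards2P. Qed.

Definition cyc4 F M (a b c d : T) : Prop :=
  uniq [:: a; b; c; d] /\ [set a; b] \in F /\ [set b; c] \in F /\ [set c; d] \in F /\
  [set d; a] \in F /\ [set a; b] \in M /\ [set b; c] \notin M /\ [set c; d] \in M /\
  [set d; a] \notin M.

Lemma cyc4_alt F M a b c d : alt_cycle F M [:: a; b; c; d] <-> cyc4 F M a b c d.
Proof.
split.
  rewrite /alt_cycle => [[U [_ [_ H]]]].
  move: (H 0 isT) (H 1 isT) (H 2 isT) (H 3 isT); rewrite /cyc_edge /=.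
  move=> [? e0] [? e1] [? e2] [? e3].
  by do !split => //; rewrite ?e0 ?e1 ?e2 ?e3.
move=> [U [Fab [Fbc [Fcd [Fda [Mab [Mbc [Mcd Mda]]]]]]]].
rewrite /alt_cycle; split => //; split => //; split => //.
case=> [|[|[|[|i]]]] // _; rewrite /cyc_edge /=; split => //.
all: try by rewrite ?Mab ?Mcd ?(negbTE Mbc) ?(negbTE Mda).
Qed.

End G.

Lemma uniq4 (T : eqType) (a b c d : T) : a != b -> a != c -> a != d -> b != c -> b != d -> c != d ->
  uniq [:: a; b; c; d].
Proof. by move=> ab ac ad bc bd cd; rewrite /= !inE !negb_or ab ac ad bc bd cd. Qed.

Section P.
Variable T : finType.
Variables (F M : {set {set T}}).
Hypothesis sg : simple_graph F.
Hypothesis pm : perfect_matching F M.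

Lemma sg_card g : g \in F -> #|g| = 2.
Proof. by move=> gF; move/forallP: sg => /(_ g) /implyP /(_ gF) /eqP. Qed.

Lemma two_at g x : g \in F -> x \in g -> exists w, w != x /\ g = [set x; w].
Proof.
move=> gF; have [u [v [uv ->]]] := edgeP sg gF.
rewrite !inE => /orP[] /eqP ->; first by exists v; rewrite eq_sym.
by exists u; split => //; rewrite setUC.
Qed.

Lemma pm_sub : M \subset F. Proof. by case/pmP: pm. Qed.
Lemma pm_cov x : exists2 e, e \in M & x \in e. Proof. by case/pmP: pm. Qed.
Lemma pm_uq x e1 e2 : e1 \in M -> e2 \in M -> x \in e1 -> x \in e2 -> e1 = e2.
Proof. by case/pmP: pm => _ _; apply. Qed.
Lemma pm_card e : e \in M -> #|e| = 2.
Proof. by move=> eM; apply: sg_card; apply: (subsetP pm_sub). Qed.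
Lemma pm_edge e : e \in M -> exists u v, u != v /\ e = [set u; v].
Proof. by move=> eM; apply: edgeP sg _; apply: (subsetP pm_sub). Qed.
Lemma pm_disj e1 e2 x : e1 \in M -> e2 \in M -> e1 != e2 -> x \in e1 -> x \in e2 -> False.
Proof. by move=> M1 M2 ne x1 x2; move/eqP: ne; apply; apply: pm_uq x1 x2. Qed.

Lemma pm_eq M' : perfect_matching F M' -> M \subset M' -> M' = M.
Proof.
move=> pm' sub; apply/eqP; rewrite eqEsubset sub andbT; apply/subsetP=> g gM'.
case/pmP: pm' => sub' _ uq'.
have [u [v [_ gE]]] := edgeP sg (subsetP sub' _ gM').
have [h hM uh] := pm_cov u.
by rewrite (uq' u g h) // ?gE ?inE ?eqxx // (subsetP sub).
Qed.

Lemma alt4 e1 e2 s : e1 \in M -> e2 \in M ->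
  alt_cycle (induced_edges F (e1 :|: e2)) M s ->
  exists a b c d, s = [:: a; b; c; d] /\ cyc4 (induced_edges F (e1 :|: e2)) M a b c d /\
    e1 :|: e2 = [set a; b; c; d].
Proof.
move=> M1 M2; case: s => [|x0 s] // Halt; have [U [sz [_ H]]] := Halt.
have sub: {subset x0 :: s <= e1 :|: e2}.
  move=> x /(nthP x0) [i lt <-]; have [Hi _] := H i lt.
  move: Hi; rewrite inE => /andP[_ /subsetP]; apply.
  by rewrite /cyc_edge !inE eqxx.
have le4: size (x0 :: s) <= 4.
  apply: leq_trans (uniq_leq_size (s2 := enum (e1 :|: e2)) U _) _.
    by move=> x /sub; rewrite mem_enum.
  by rewrite -cardE cardsU (pm_card M1) (pm_card M2) leq_subr.
case: s U sz H sub le4 Halt => [|b [|c [|d [|? ?]]]] //= U _ _ sub _ Halt.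
exists x0, b, c, d; split => //; split; first by apply/cyc4_alt.
apply/eqP; rewrite eq_sym eqEcard; apply/andP; split.
  by apply/subsetP=> x Hx; apply: sub; move: Hx; rewrite !inE -!orbA.
have ->: #|[set x0; b; c; d]| = #|[:: x0; b; c; d]| by apply: eq_card => x; rewrite !inE -!orbA.
by rewrite (card_uniqP (U : uniq [:: x0; b; c; d])) cardsU (pm_card M1) (pm_card M2) leq_subr.
Qed.


Lemma set2_sub (u v : T) (A : {set T}) : ([set u; v] \subset A) = (u \in A) && (v \in A).
Proof. by rewrite subUset !sub1set. Qed.

Lemma eq_edge g e : g \in F -> e \in F -> g \subset e -> g = e.
Proof. by move=> gF eF ge; apply/eqP; rewrite eqEcard ge (sg_card gF) (sg_card eF). Qed.

Lemma force_one e : e \in M -> forcing_set F M (M :\ e).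
Proof.
move=> eM; rewrite /forcing_set subD1set /=.
apply/forallP=> M'; apply/implyP=> /andP[pm' sub].
have := pm'; case/pmP => sub' cov' uq'.
apply/eqP; apply: pm_eq => //.
apply/subsetP=> h hM; case: (h =P e) => [->|/eqP hne]; last first.
  by apply: (subsetP sub); rewrite !inE hne.
have [u [v [uv eE]]] := pm_edge eM.
have [g gM' ug] := cov' u.
have ge: g \subset e.
  apply/subsetP=> y yg; have [h' h'M yh'] := pm_cov y.
  case: (h' =P e) => [<-//|/eqP ne].
  have h'M' : h' \in M' by apply: (subsetP sub); rewrite !inE ne.
  have gh := uq' y g h' gM' h'M' yg yh'; subst g.
  by move/eqP: ne; rewrite (pm_uq h'M eM ug) // eE !inE eqxx.
rewrite -(eq_edge (subsetP sub' _ gM') (subsetP pm_sub _ eM) ge) //.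
Qed.


Lemma pair_cycle ei ej M' : ei \in M -> ej \in M -> ei != ej ->
  perfect_matching F M' ->
  (forall h, h \in M -> h != ei -> h != ej -> h \in M') ->
  ei \notin M' -> has_alt_cycle_in F M (ei :|: ej).
Proof.
move=> eiM ejM neij pm' Hrest nei.
have := pm'; case/pmP => sub' cov' uq'.
have [a [b [ab eiE]]] := pm_edge eiM.
have [c [d [cd ejE]]] := pm_edge ejM.
have inside: forall g x y, g \in M' -> x \in g -> x \in ei :|: ej -> y \in g -> y \in ei :|: ej.
  move=> g x y gM' xg xV yg; have [h hM yh] := pm_cov y.
  case: (h =P ei) => [<-|/eqP hi]; first by rewrite inE yh.
  case: (h =P ej) => [<-|/eqP hj]; first by rewrite inE yh orbT.
  have hM' := Hrest h hM hi hj.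
  have gh := uq' y g h gM' hM' yg yh; subst g.
  move: xV; rewrite inE => /orP[] xe.
    by case: (pm_disj hM eiM hi xg xe).
  by case: (pm_disj hM ejM hj xg xe).
have dis: forall x, x \in ei -> x \in ej -> False.
  by move=> x xi xj; apply: (pm_disj eiM ejM neij xi xj).
have ac : a != c by apply/eqP=> E; apply: (dis a); rewrite ?eiE ?ejE E !inE eqxx ?orbT.
have ad : a != d by apply/eqP=> E; apply: (dis a); rewrite ?eiE ?ejE E !inE eqxx ?orbT.
have bc : b != c by apply/eqP=> E; apply: (dis b); rewrite ?eiE ?ejE E !inE eqxx ?orbT.
have bd : b != d by apply/eqP=> E; apply: (dis b); rewrite ?eiE ?ejE E !inE eqxx ?orbT.
have aV : a \in ei :|: ej by rewrite eiE !inE eqxx.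
have bV : b \in ei :|: ej by rewrite eiE !inE eqxx orbT.
have [g gM' ag] := cov' a.
have [z [za gE]] := two_at (subsetP sub' _ gM') ag.
have [g' g'M' bg'] := cov' b.
have [w [wb g'E]] := two_at (subsetP sub' _ g'M') bg'.
have gV : g \subset ei :|: ej by apply/subsetP=> y; apply: inside gM' ag aV.
have g'V : g' \subset ei :|: ej by apply/subsetP=> y; apply: inside g'M' bg' bV.
have gnM : g \notin M.
  apply/negP=> gM; have E: g = ei by apply: (pm_uq gM eiM ag); rewrite eiE !inE eqxx.
  by move: nei; rewrite -E gM'.
have g'nM : g' \notin M.
  apply/negP=> gM; have E: g' = ei by apply: (pm_uq gM eiM bg'); rewrite eiE !inE eqxx orbT.
  by move: nei; rewrite -E g'M'.
have zV : z \in ei :|: ej by apply: (subsetP gV); rewrite gE !inE eqxx orbT.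
have wV : w \in ei :|: ej by apply: (subsetP g'V); rewrite g'E !inE eqxx orbT.
have zb : z != b.
  apply/eqP=> zbE; move: nei; rewrite eiE -zbE -gE gM'.
  done.
have wa : w != a.
  apply/eqP=> waE; move: nei; rewrite eiE setUC -waE -g'E g'M'.
  done.
have zw : z != w.
  apply/eqP=> zwE; have gg : g = g'.
    by apply: (uq' z g g') => //; rewrite ?gE ?g'E -?zwE !inE eqxx orbT.
  by move: bg'; rewrite -gg gE !inE eq_sym (negbTE ab) eq_sym (negbTE zb).
have key: forall c' d', ej = [set c'; d'] -> b != c' -> a != d' -> c' != d' ->
    a != c' -> b != d' -> [set b; c'] = g' -> [set d'; a] = g ->
    has_alt_cycle_in F M (ei :|: ej).
  move=> c' d' ejE' bc' ad' cd' ac' bd' g'E' gE'.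
  exists [:: a; b; c'; d']; apply/cyc4_alt.
  have eiF := subsetP pm_sub _ eiM; have ejF := subsetP pm_sub _ ejM.
  rewrite /cyc4 !inE -eiE -ejE' g'E' gE' eiM ejM gnM g'nM eiF ejF.
  rewrite (subsetP sub' _ gM') (subsetP sub' _ g'M') gV g'V subsetUl subsetUr.
  by rewrite uniq4.
rewrite eiE ejE !inE (negbTE za) (negbTE zb) /= in zV.
rewrite eiE ejE !inE (negbTE wa) (negbTE wb) /= in wV.
case/orP: zV => /eqP zE; case/orP: wV => /eqP wE; subst z w.
- by rewrite eqxx in zw.
- by apply: (key d c) => //; rewrite 1?setUC // 1?eq_sym.
- by apply: (key c d) => //; rewrite 1?setUC.
- by rewrite eqxx in zw.
Qed.


Lemma force_pair ei ej : ei \in M -> ej \in M -> ei != ej ->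
  ~ has_alt_cycle_in F M (ei :|: ej) -> forcing_set F M (M :\ ei :\ ej).
Proof.
move=> eiM ejM ne Hna; apply/andP; split.
  by apply/subsetP=> h; rewrite !inE => /and3P[].
apply/forallP=> M'; apply/implyP=> /andP[pm' sub].
have Hrest: forall h, h \in M -> h != ei -> h != ej -> h \in M'.
  by move=> h hM hi hj; apply: (subsetP sub); rewrite !inE hi hj hM.
have iM': ei \in M'.
  apply/negPn/negP=> nei; apply: Hna; exact: (pair_cycle eiM ejM ne pm' Hrest nei).
have jM': ej \in M'.
  apply/negPn/negP=> nej; apply: Hna; rewrite setUC.
  apply: (pair_cycle ejM eiM _ pm' _ nej); first by rewrite eq_sym.
  by move=> h hM hj hi; apply: Hrest.
apply/eqP; apply: pm_eq => //; apply/subsetP=> h hM.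
case: (h =P ei) => [->//|/eqP hi]; case: (h =P ej) => [->//|/eqP hj].
exact: Hrest.
Qed.

Lemma notforce ei ej (S : {set {set T}}) : ei \in M -> ej \in M -> ei != ej ->
  has_alt_cycle_in F M (ei :|: ej) -> S \subset M -> ei \notin S -> ej \notin S ->
  ~~ forcing_set F M S.
Proof.
move=> eiM ejM ne [s Hs] SM eiS ejS.
have [a [b [c [d [_ [C4 VE]]]]]] := alt4 eiM ejM Hs.
move: C4; rewrite /cyc4 !inE.
move=> [U [/andP[Fab Vab] [/andP[Fbc Vbc] [/andP[Fcd Vcd] [/andP[Fda Vda] [Mab [Mbc [Mcd Mda]]]]]]]].
move: (U); rewrite /= !inE !negb_or => /and4P[/and3P[ab ac ad] /andP[bc bd] cd _].
pose M' := (M :\ [set a; b] :\ [set c; d]) :|: [set [set b; c]; [set d; a]].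
have inV : forall x, x \in ei :|: ej -> x \in [set a; b] \/ x \in [set c; d].
  by move=> x; rewrite VE !inE -!orbA => /or4P[] ->; rewrite ?orbT; [left|left|right|right].
have M0 : forall h x, h \in M -> h != [set a; b] -> h != [set c; d] -> x \in h ->
    x \notin [set a; b; c; d].
  move=> h x hM h1 h2 xh; apply/negP => xV.
  have: x \in ei :|: ej by rewrite VE.
  case/inV => xe.
    by move/eqP: h1; apply; apply: (pm_uq hM Mab xh xe).
  by move/eqP: h2; apply; apply: (pm_uq hM Mcd xh xe).
have pmM' : perfect_matching F M'.
  apply/pmP; split.
  - apply/subsetP=> h; rewrite !inE => /orP[/and3P[_ _ hM]|/orP[]/eqP->] //.
    exact: (subsetP pm_sub).
  - move=> x; have [h hM xh] := pm_cov x.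
    case: (h =P [set a; b]) => [hE|/eqP h1].
      move: xh; rewrite hE !inE => /orP[]/eqP->.
        by exists [set d; a]; rewrite !inE ?eqxx ?orbT.
      by exists [set b; c]; rewrite !inE ?eqxx ?orbT.
    case: (h =P [set c; d]) => [hE|/eqP h2].
      move: xh; rewrite hE !inE => /orP[]/eqP->.
        by exists [set b; c]; rewrite !inE ?eqxx ?orbT.
      by exists [set d; a]; rewrite !inE ?eqxx ?orbT.
    by exists h; rewrite // !inE h1 h2 hM.
  - have cls: forall x h, h \in M' -> x \in h ->
       (x \notin [set a; b; c; d] /\ h \in M) \/ h = [set b; c] \/ h = [set d; a].
      move=> x h; rewrite !inE => /orP[/and3P[h2 h1 hM] xh|/orP[]/eqP->]; [left|right; left|right; right] => //.
      by split => //; move: (M0 h x hM h1 h2 xh); rewrite !inE.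
    have bcV : forall x, x \in [set b; c] -> x \in [set a; b; c; d].
      by move=> x; rewrite !inE => /orP[]->; rewrite ?orbT.
    have daV : forall x, x \in [set d; a] -> x \in [set a; b; c; d].
      by move=> x; rewrite !inE => /orP[]->; rewrite ?orbT.
    have bcda : forall x, x \in [set b; c] -> x \in [set d; a] -> False.
      move=> x; rewrite !inE => /orP[]/eqP-> /orP[]/eqP E.
      - by rewrite E eqxx in bd.
      - by rewrite E eqxx in ab.
      - by rewrite E eqxx in cd.
      - by rewrite E eqxx in ac.
    move=> x h1 h2 H1 H2 x1 x2.
    case: (cls x h1 H1 x1) => [[n1 M1]|[] E1]; case: (cls x h2 H2 x2) => [[n2 M2]|[] E2];
      subst => //.
    - exact: (pm_uq M1 M2 x1 x2).
    - by rewrite (bcV x x2) in n1.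
    - by rewrite (daV x x2) in n1.
    - by rewrite (bcV x x1) in n2.
    - by case: (bcda x x1 x2).
    - by rewrite (daV x x1) in n2.
    - by case: (bcda x x2 x1).
have abS : [set a; b] \notin S.
  have: a \in ei :|: ej by rewrite VE !inE eqxx.
  rewrite inE => /orP[] ae.
    by rewrite (pm_uq Mab eiM _ ae) // !inE eqxx.
  by rewrite (pm_uq Mab ejM _ ae) // !inE eqxx.
have cdS : [set c; d] \notin S.
  have: c \in ei :|: ej by rewrite VE !inE eqxx ?orbT.
  rewrite inE => /orP[] ae.
    by rewrite (pm_uq Mcd eiM _ ae) // !inE eqxx.
  by rewrite (pm_uq Mcd ejM _ ae) // !inE eqxx.
rewrite /forcing_set negb_and; apply/orP; right.
rewrite negb_forall; apply/existsP; exists M'.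
rewrite negb_imply; apply/andP; split; first (apply/andP; split) => //.
  apply/subsetP=> h hS; rewrite !inE (subsetP SM _ hS) andbT.
  apply/orP; left; apply/andP; split; apply/eqP=> E; subst h.
    by rewrite hS in cdS.
  by rewrite hS in abS.
apply/eqP=> E; move: Mbc; rewrite -E !inE eqxx orbT.
done.
Qed.

End P.

Lemma bigmin_le (I : eqType) (r : seq I) (P : pred I) (G : I -> nat) x i0 :
  i0 \in r -> P i0 -> \big[minn/x]_(i <- r | P i) G i <= G i0.
Proof.
move=> ir Pi; elim: r ir => // j r IH; rewrite inE big_cons => /orP[/eqP<-|/IH le].
  by rewrite Pi geq_minl.
by case: (P j) => //; rewrite geq_min le orbT.
Qed.

Section Q.
Variable T : finType.
Variables (F M : {set {set T}}).
Hypothesis sg : simple_graph F.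
Hypothesis pm : perfect_matching F M.

Lemma fn_le S : forcing_set F M S -> forcing_number F M <= #|S|.
Proof.
move=> fS; rewrite /forcing_number; apply: bigmin_le; first exact: mem_index_enum.
by rewrite powersetE fS; case/andP: fS => ->.
Qed.

Lemma fn_ge k : (forall S : {set {set T}}, S \subset M -> forcing_set F M S -> k <= #|S|) -> k <= #|M| ->
  k <= forcing_number F M.
Proof.
move=> H kM; rewrite /forcing_number; apply: (big_ind (fun m => k <= m)) => //.
  by move=> x y kx ky; rewrite leq_min kx ky.
by move=> S /andP[]; rewrite powersetE; apply: H.
Qed.

Lemma pm_size : #|T| = 2 * #|M|.
Proof.
have part : partition M [set: T].
  apply/and3P; split.
  - apply/eqP/setP=> x; rewrite inE; apply/bigcupP.
    by have [e eM xe] := pm_cov pm x; exists e.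
  - apply/trivIsetP=> A B AM BM ne; rewrite -setI_eq0; apply/eqP/setP=> x; rewrite !inE.
    apply/negbTE/negP => /andP[xA xB].
    exact: (pm_disj pm AM BM ne xA xB).
  - apply/negP=> M0; move: (pm_card sg pm M0); by rewrite cards0.
rewrite -cardsT (card_partition part) (eq_bigr (fun _ => 2)).
  by rewrite sum_nat_const mulnC.
by move=> e eM; rewrite (pm_card sg pm eM).
Qed.

Variable n : nat.
Hypothesis n2 : 2 <= n.
Hypothesis cT : #|T| = 2 * n.

Lemma cardM : #|M| = n.
Proof. by move: pm_size; rewrite cT; lia. Qed.

Lemma fn_le_n1 : forcing_number F M <= n.-1.
Proof.
have : 0 < #|M| by rewrite cardM; lia.
case/card_gt0P => e eM.
apply: leq_trans (fn_le (force_one sg pm eM)) _.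
by move: (cardsD1 e M); rewrite eM cardM; lia.
Qed.

Definition pairs_alt := forall ei ej, ei \in M -> ej \in M -> ei != ej ->
        has_alt_cycle_in F M (ei :|: ej).

Lemma part1 : forcing_number F M = n.-1 <-> pairs_alt.
Proof.
split.
  move=> fE ei ej eiM ejM ne; apply: NNPP => Hna.
  have := fn_le (force_pair sg pm eiM ejM ne Hna).
  have := cardsD1 ei M; have := cardsD1 ej (M :\ ei).
  rewrite eiM !inE eq_sym ne ejM /= cardM fE; lia.
move=> Hp; apply/eqP; rewrite eqn_leq fn_le_n1 /=.
apply: fn_ge; last by rewrite cardM; lia.
move=> S SM fS; rewrite leqNgt; apply/negP=> lt.
have : 1 < #|M :\: S|.
  by rewrite cardsD (setIidPr SM) cardM; lia.
case/card_gt1P=> ei [ej [/setDP[eiM eiS] /setDP[ejM ejS] ne]].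
by move: fS; apply/negP; apply: (notforce sg pm eiM ejM ne (Hp ei ej eiM ejM ne)).
Qed.

End Q.

Section D.
Variable T : finType.
Implicit Types (F M : {set {set T}}).

Definition cov M (y : T) : {set T} := odflt set0 [pick e in M | y \in e].
Definition oth (x : T) (g : {set T}) : T := odflt x [pick y in g | y != x].

Lemma cov_spec F M y : perfect_matching F M -> cov M y \in M /\ y \in cov M y.
Proof.
move=> pm; rewrite /cov; case: pickP => [e /andP[] //|none] /=.
by have [e eM ye] := pm_cov pm y; move: (none e); rewrite eM ye.
Qed.

Lemma cov_eq F M y e : perfect_matching F M -> e \in M -> y \in e -> cov M y = e.
Proof.
move=> pm eM ye; have [cM yc] := cov_spec y pm; exact: (pm_uq pm cM eM yc ye).
Qed.

Lemma oth_spec F g x : simple_graph F -> g \in F -> x \in g ->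
  g = [set x; oth x g] /\ oth x g != x.
Proof.
move=> sg gF xg; have [w [wx gE]] := two_at sg gF xg.
rewrite /oth; case: pickP => [y /andP[yg yx]|none] /=.
  move: yg; rewrite gE !inE (negbTE yx) /= => /eqP->; by [].
by move: (none w); rewrite gE !inE wx eqxx orbT.
Qed.

Definition deg F (x : T) := #|[set g in F | x \in g]|.

Lemma deg_lower n F M x : simple_graph F -> perfect_matching F M -> #|M| = n ->
  pairs_alt F M -> n <= deg F x.
Proof.
move=> sg pm cM Hp; rewrite -cM /deg.
apply: leq_trans (leq_imset_card (fun g => cov M (oth x g)) [set g in F | x \in g]).
apply: subset_leq_card; apply/subsetP => e eM; apply/imsetP.
have [exM xex] := cov_spec x pm.
case: (cov M x =P e) => [exe|/eqP ne].
  have eF := subsetP (pm_sub pm) _ eM.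
  have xe : x \in e by rewrite -exe.
  exists e; first by rewrite inE eF xe.
  have [eE _] := oth_spec sg eF xe.
  by rewrite (cov_eq pm eM) // {2}eE !inE eqxx orbT.
have fin: forall g, g \in F -> g \subset cov M x :|: e -> g \notin M -> x \in g ->
    e = cov M (oth x g).
  move=> g gF gV gM xg; have [gE ox] := oth_spec sg gF xg.
  have: oth x g \in cov M x :|: e by apply: (subsetP gV); rewrite {2}gE !inE eqxx orbT.
  rewrite inE => /orP[] oe; last by rewrite (cov_eq pm eM oe).
  exfalso; move/negP: gM; apply.
  suff ->: g = cov M x by [].
  apply: (eq_edge sg gF (subsetP (pm_sub pm) _ exM)).
  by rewrite gE set2_sub xex oe.
have [s Hs] := Hp _ _ exM eM ne.
have [a [b [c [d [_ [C4 VE]]]]]] := alt4 sg pm exM eM Hs.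
move: C4; rewrite /cyc4 !inE.
move=> [U [/andP[Fab Vab] [/andP[Fbc Vbc] [/andP[Fcd Vcd] [/andP[Fda Vda] [Mab [Mbc [Mcd Mda]]]]]]]].
have: x \in cov M x :|: e by rewrite inE xex.
rewrite VE !inE -!orbA => /or4P[] /eqP xE.
- exists [set d; a]; first by rewrite inE Fda xE !inE eqxx orbT.
  by apply: fin; rewrite // xE !inE eqxx orbT.
- exists [set b; c]; first by rewrite inE Fbc xE !inE eqxx.
  by apply: fin; rewrite // xE !inE eqxx.
- exists [set b; c]; first by rewrite inE Fbc xE !inE eqxx orbT.
  by apply: fin; rewrite // xE !inE eqxx orbT.
- exists [set d; a]; first by rewrite inE Fda xE !inE eqxx.
  by apply: fin; rewrite // xE !inE eqxx.
Qed.


Definition pairs_exact F M := forall ei ej, ei \in M -> ej \in M -> ei != ej ->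
  is_alt_4cycle F M (ei :|: ej).

Lemma deg_upper n F M x : simple_graph F -> perfect_matching F M -> #|M| = n ->
  pairs_exact F M -> deg F x <= n.
Proof.
move=> sg pm cM Hp; rewrite -cM /deg.
set D := [set g in F | x \in g].
have inj: {in D &, injective (fun g => cov M (oth x g))}.
  move=> g1 g2; rewrite !inE => /andP[g1F x1] /andP[g2F x2] /= Heq.
  have [E1 o1] := oth_spec sg g1F x1; have [E2 o2] := oth_spec sg g2F x2.
  have [eM y1e] := cov_spec (oth x g1) pm.
  have y2e : oth x g2 \in cov M (oth x g1) by rewrite Heq; exact: (cov_spec _ pm).2.
  move: eM y1e y2e Heq; set e := cov M (oth x g1) => eM y1e y2e Heq.
  have [exM xex] := cov_spec x pm.
  case: (cov M x =P e) => [exe|/eqP ne].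
    have g1ex : g1 = cov M x.
      by apply: (eq_edge sg g1F (subsetP (pm_sub pm) _ exM)); rewrite E1 set2_sub xex exe y1e.
    have g2ex : g2 = cov M x.
      by apply: (eq_edge sg g2F (subsetP (pm_sub pm) _ exM)); rewrite E2 set2_sub xex exe y2e.
    by rewrite g1ex g2ex.
  have [a [b [c [d [Halt IE]]]]] := Hp _ _ exM eM ne.
  move/cyc4_alt: Halt => [U [_ [_ [_ [_ [Mab [_ [Mcd _]]]]]]]].
  move: U; rewrite /= !inE !negb_or => /and4P[/and3P[ab ac ad] /andP[bc bd] cd _].
  have cls: forall g y, g \in F -> g = [set x; y] -> y \in e -> g = [set b; c] \/ g = [set d; a].
    move=> g y gF gE ye.
    have: g \in induced_edges F (cov M x :|: e).
      by rewrite inE gF gE set2_sub !inE xex ye orbT.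
    have bad: g \in M -> False.
      move=> gM; have gx: g = cov M x by apply: (pm_uq pm gM exM _ xex); rewrite gE !inE eqxx.
      by apply: (pm_disj pm exM eM ne (x := y)) => //; rewrite -gx gE !inE eqxx orbT.
    rewrite IE !inE => /or4P[] /eqP gE'.
    - by case: bad; rewrite gE'.
    - by left.
    - by case: bad; rewrite gE'.
    - by right.
  have bcda : x \in [set b; c] -> x \in [set d; a] -> False.
    rewrite !inE => /orP[]/eqP-> /orP[]/eqP E.
    - by rewrite E eqxx in bd.
    - by rewrite E eqxx in ab.
    - by rewrite E eqxx in cd.
    - by rewrite E eqxx in ac.
  case: (cls g1 _ g1F E1 y1e) => G1; case: (cls g2 _ g2F E2 y2e) => G2; rewrite G1 G2 //.
  - by case: bcda; rewrite -?G1 -?G2.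
  - by case: bcda; rewrite -?G1 -?G2.
rewrite -(card_in_imset inj); apply: subset_leq_card; apply/subsetP=> e /imsetP[g _ ->].
exact: (cov_spec _ pm).1.
Qed.

End D.

Lemma union_of (T : finType) (F M : {set {set T}}) g u v e1 e2 :
  simple_graph F -> perfect_matching F M -> g \in F -> g \notin M -> g = [set u; v] ->
  e1 \in M -> e2 \in M -> g \subset e1 :|: e2 -> e1 :|: e2 = cov M u :|: cov M v.
Proof.
move=> sg pm gF gM gE M1 M2; rewrite gE set2_sub !inE => /andP[].
have bad: forall e, e \in M -> u \in e -> v \in e -> False.
  move=> e eM ue ve; move/negP: gM; apply.
  suff ->: g = e by [].
  by apply: (eq_edge sg gF (subsetP (pm_sub pm) _ eM)); rewrite gE set2_sub ue ve.
move=> /orP[] ue /orP[] ve.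
- by case: (bad e1).
- by rewrite (cov_eq pm M1 ue) (cov_eq pm M2 ve).
- by rewrite (cov_eq pm M2 ue) (cov_eq pm M1 ve) setUC.
- by case: (bad e2).
Qed.

Lemma sg_del (T : finType) (E : {set {set T}}) g : simple_graph E -> simple_graph (E :\ g).
Proof.
move=> /forallP sg; apply/forallP=> a; apply/implyP; rewrite inE => /andP[_ aE].
exact: (implyP (sg a) aE).
Qed.

Theorem lemma2p2 (T : finType) (n : nat) (E : {set {set T}}) :
  2 <= n -> #|T| = 2 * n -> simple_graph E -> has_perfect_matching E ->
  (forall M, perfect_matching E M ->
     forcing_number E M = n.-1 <->
     (forall ei ej, ei \in M -> ej \in M -> ei != ej ->
        has_alt_cycle_in E M (ei :|: ej)))
  /\
  ((exists M, perfect_matching E M /\ forcing_number E M = n.-1) <->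
   (exists M, perfect_matching E M /\
      (forall ei ej, ei \in M -> ej \in M -> ei != ej ->
         has_alt_cycle_in E M (ei :|: ej))))
  /\
  (minimal_graph n E <->
   exists M, perfect_matching E M /\
      (forall ei ej, ei \in M -> ej \in M -> ei != ej ->
         is_alt_4cycle E M (ei :|: ej))).
Proof.
move=> n2 cT sg hpm.
have P1 : forall M, perfect_matching E M -> forcing_number E M = n.-1 <-> pairs_alt E M.
  by move=> M pm; apply: part1.
split; first exact: P1.
split.
  split=> [[M [pm fE]]|[M [pm H]]]; exists M; split => //.
    by apply/P1.
  by apply/P1.
split.
  move=> [_ [maxE Hmin]].
  have [M [pm fE]]: exists M, perfect_matching E M /\ forcing_number E M = n.-1.
    apply: NNPP => H.
    have: max_forcing_number E <= n.-2.
      apply/bigmax_leqP => M pm.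
      have := fn_le_n1 sg pm n2 cT.
      have : forcing_number E M <> n.-1 by move=> fE; apply: H; exists M.
      move: (forcing_number E M) => m; clear; lia.
    rewrite maxE; clear -n2; lia.
  have Ha := proj1 (P1 M pm) fE.
  exists M; split => // ei ej eiM ejM ne.
  have [s Hs] := Ha ei ej eiM ejM ne.
  have [a [b [c [d [sE [C4 VE]]]]]] := alt4 sg pm eiM ejM Hs.
  exists a, b, c, d; split; first by apply/cyc4_alt.
  have C4' := C4.
  move: C4; rewrite /cyc4 !inE.
  move=> [U [/andP[Fab Vab] [/andP[Fbc Vbc] [/andP[Fcd Vcd] [/andP[Fda Vda] [Mab [Mbc [Mcd Mda]]]]]]]].
  apply/eqP; rewrite eqEsubset; apply/andP; split; last first.
    apply/subsetP=> g; rewrite !inE => /orP[/eqP->|/orP[/eqP->|/orP[/eqP->|/eqP->]]];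
      by rewrite ?Fab ?Fbc ?Fcd ?Fda ?Vab ?Vbc ?Vcd ?Vda.
  apply/subsetP=> g gI; apply/negPn/negP => gn.
  move: (gI); rewrite inE => /andP[gE gV].
  have gnM : g \notin M.
    apply/negP=> gM; have [u [v [uv gE']]] := edgeP sg gE.
    have: u \in ei :|: ej by apply: (subsetP gV); rewrite gE' !inE eqxx.
    rewrite VE !inE => /orP[/orP[/orP[]|]|] /eqP uE.
    - by move: gn; rewrite (pm_uq pm gM Mab (x := u)) ?gE' ?uE !inE ?eqxx.
    - by move: gn; rewrite (pm_uq pm gM Mab (x := u)) ?gE' ?uE !inE ?eqxx ?orbT.
    - by move: gn; rewrite (pm_uq pm gM Mcd (x := u)) ?gE' ?uE !inE ?eqxx ?orbT.
    - by move: gn; rewrite (pm_uq pm gM Mcd (x := u)) ?gE' ?uE !inE ?eqxx ?orbT.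
  have sg' := sg_del g sg.
  have pm' : perfect_matching (E :\ g) M.
    case/pmP: pm => sub cov uq; apply/pmP; split => //.
    apply/subsetP=> h hM; rewrite !inE (subsetP sub _ hM) andbT.
    by apply/eqP=> hg; rewrite -hg hM in gnM.
  have Ha' : pairs_alt (E :\ g) M.
    move=> ek el ekM elM nekl.
    have [u [v [uv gE']]] := edgeP sg gE.
    case: (boolP (g \subset ek :|: el)) => gkl.
      have ->: ek :|: el = ei :|: ej.
        by rewrite (union_of sg pm gE gnM gE' ekM elM gkl) (union_of sg pm gE gnM gE' eiM ejM gV).
      exists [:: a; b; c; d]; apply/cyc4_alt.
      move: gn; rewrite !inE !negb_or => /and4P[n1 n2' n3 n4].
      rewrite /cyc4 !inE Fab Fbc Fcd Fda Vab Vbc Vcd Vda Mab Mcd Mbc Mda U /=.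
      by rewrite !(eq_sym _ g) n1 n2' n3 n4.
    have [s' Hs'] := Ha ek el ekM elM nekl.
    exists s'; have ->: induced_edges (E :\ g) (ek :|: el) = induced_edges E (ek :|: el) => //.
    apply/setP=> h; rewrite !inE; case: (h =P g) => [->|_] //=.
    by rewrite (negbTE gkl) andbF.
  have fE' := proj2 (part1 sg' pm' n2 cT) Ha'.
  have : n.-1 <= max_forcing_number (E :\ g).
    by rewrite -fE' /max_forcing_number; apply: leq_bigmax_cond.
  case: (Hmin g gE) => [nh | le]; last first.
    by move: le; move: (max_forcing_number (E :\ g)) => m; clear -n2; lia.
  by case/negP: nh; apply/existsP; exists M.
move=> [M [pm Hx]].
have Ha : pairs_alt E M.
  move=> ei ej eiM ejM ne; have [a [b [c [d [Hc _]]]]] := Hx ei ej eiM ejM ne.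
  by exists [:: a; b; c; d].
have fE := proj2 (P1 M pm) Ha.
split => //; split.
  apply/eqP; rewrite eqn_leq; apply/andP; split.
    by apply/bigmax_leqP => M' pm'; apply: fn_le_n1.
  by rewrite -fE /max_forcing_number; apply: leq_bigmax_cond.
move=> g gE; right; apply/bigmax_leqP => M' pm'.
have sg' := sg_del g sg.
rewrite leqNgt; apply/negP => lt.
have fE' : forcing_number (E :\ g) M' = n.-1.
  by have := fn_le_n1 sg' pm' n2 cT; move: lt; move: (forcing_number _ _) => m; clear -n2; lia.
have Ha' := proj1 (part1 sg' pm' n2 cT) fE'.
have [u [v [uv gE']]] := edgeP sg gE.
have dl := deg_lower u sg' pm' (cardM sg' pm' n2 cT) Ha'.
have du := deg_upper u sg pm (cardM sg pm n2 cT) Hx.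
move: dl du; rewrite /deg.
have ->: [set h in E :\ g | u \in h] = [set h in E | u \in h] :\ g.
  by apply/setP=> h; rewrite !inE andbA.
have := cardsD1 g [set h in E | u \in h].
rewrite inE gE gE' !inE eqxx /=.
move: (#|_|) (#|_|) => k1 k2; clear; lia.
Qed.
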